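(* Let $q\in\mathbb{N}\setminus\{1\}$, let $X$ be the geometric armadillo tail with parameter $r=\frac1q$, and let $k>2$ be an integer. Then there exists a saddle connection, called $\mathrm{bsc}_k'$, namely the straight-line trajectory of slope $\frac{q}{2q-1}$ starting at the singular point $(1+\frac1q+\dots+\frac1{q^{k-1}},0)$ (the lower right vertex of $\square_k$): this trajectory reaches the singularity again after finite length without passing through it in between.
   Context: Set $l_k=q^{-(k-1)}$, $s_k=l_1+\dots+l_k$ ($s_0=0$), and $\square_k=[s_{k-1},s_k]\times[0,l_k]\subset\mathbb{R}^2$. The geometric armadillo tail with parameter $\frac1q$ is obtained from $P=\bigcup_k\square_k$ by gluing the top edge of each $\square_k$ to its bottom edge by vertical translation, and for each $k\ge1$ gluing $\{s_k\}\times[l_{k+1},l_k]$ by horizontal translation to $\{0\}\times[l_{k+1},l_k]$; then taking the metric completion, in which all vertices of $P$ become a single wild singularity. Trajectories and slopes are computed in the polygonal representation $P$ with these gluings. A saddle connection is a closed straight-line segment from the singularity to itself with no singular point in its interior. *)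

(* Defs.v *)
From Stdlib Require Import Reals List Lra Lia.
Open Scope R_scope.

(* l_k = q^{-(k-1)}  (meaningful for k >= 1) *)
Definition l (q k : nat) : R := (/ INR q) ^ (k - 1).

Fixpoint s (q k : nat) : R :=
  match k with
  | O => 0
  | S k' => s q k' + l q (S k')
  end.

Definition inP (q : nat) (p : R * R) : Prop :=
  exists k : nat, (1 <= k)%nat /\
    s q (k - 1) <= fst p <= s q k /\ 0 <= snd p <= l q k.

(* Vertices of P (all identified to the single wild singularity):
   (s_k, 0) for k >= 0, and for k >= 1 the points (s_{k-1}, l_k), (s_k, l_k)
   and (0, l_k) (the endpoints of the pieces of the left edge of square 1
   glued to the pieces {s_k} x [l_{k+1}, l_k]).  Note (s_k, l_{k+1}) is
   (s_{(k+1)-1}, l_{k+1}). *)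
Definition is_vertex (q : nat) (p : R * R) : Prop :=
  (exists k : nat, p = (s q k, 0)) \/
  (exists k : nat, (1 <= k)%nat /\
     (p = (s q (k - 1), l q k) \/ p = (s q k, l q k) \/ p = (0, l q k))).

Definition glue_pair (q : nat) (p p' : R * R) : Prop :=
  exists k : nat, (1 <= k)%nat /\
   ((exists x : R, s q (k - 1) <= x <= s q k /\ p = (x, l q k) /\ p' = (x, 0)) \/
    (exists y : R, l q (S k) <= y <= l q k /\ p = (s q k, y) /\ p' = (0, y))).

Definition glue (q : nat) (p p' : R * R) : Prop :=
  p = p' \/ glue_pair q p p' \/ glue_pair q p' p.

(* A piece of trajectory: a start point and a length parameter t; it is the
   segment { start + tau * v | 0 <= tau <= t }. *)
Definition piece := ((R * R) * R)%type.
Definition piece0 : piece := ((0, 0), 0).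

Definition at_time (v : R * R) (c : piece) (tau : R) : R * R :=
  (fst (fst c) + tau * fst v, snd (fst c) + tau * snd v).

Definition piece_end (v : R * R) (c : piece) : R * R := at_time v c (snd c).

(* A saddle connection of X in direction v starting at the vertex p0, given in the
   polygonal representation P as a finite chain of straight segments in P,
   consecutive ones joined through the gluings, starting and ending at the
   singularity, with no singular point in between. *)
Definition saddle_connection_from (q : nat) (p0 v : R * R) (L : list piece) : Prop :=
  L <> nil /\
  fst (nth 0 L piece0) = p0 /\ is_vertex q p0 /\
  (forall i : nat, (i < length L)%nat ->
     0 < snd (nth i L piece0) /\
     (forall tau : R, 0 <= tau <= snd (nth i L piece0) ->
        inP q (at_time v (nth i L piece0) tau)) /\
     (forall tau : R, 0 < tau < snd (nth i L piece0) ->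
        ~ is_vertex q (at_time v (nth i L piece0) tau))) /\
  (forall i : nat, (S i < length L)%nat ->
     ~ is_vertex q (piece_end v (nth i L piece0)) /\
     ~ is_vertex q (fst (nth (S i) L piece0)) /\
     glue q (piece_end v (nth i L piece0)) (fst (nth (S i) L piece0))) /\
  is_vertex q (piece_end v (last L piece0)).

(* Main.v *)
Require Import Defs.
From Stdlib Require Import Reals List Lra Lia.
Open Scope R_scope.
Import ListNotations.

Definition rr (q : nat) : R := / INR q.
Definition ww (q : nat) : R := 2 * INR q - 1.
Definition mm (q : nat) : R := INR q / ww q.
Definition vv (q : nat) : R * R := (2 * INR q - 1, INR q).

Lemma Q_ge2 q : (2 <= q)%nat -> 2 <= INR q.
Proof. intro h. apply le_INR in h. simpl in h. lra. Qed.

Lemma r_facts q : (2 <= q)%nat ->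
  0 < rr q /\ rr q <= /2 /\ rr q * INR q = 1 /\ 0 < ww q /\
  mm q * (2 - rr q) = 1 /\ /2 < mm q /\ mm q < 1 /\ rr q < mm q.
Proof.
  intro h. pose proof (Q_ge2 q h) as HQ. unfold rr, mm, ww.
  assert (0 < / INR q) by (apply Rinv_0_lt_compat; lra).
  assert (/ INR q <= /2) by (apply Rinv_le_contravar; lra).
  assert (/ INR q * INR q = 1) by (field; lra).
  assert (E : INR q / (2 * INR q - 1) * (2 - / INR q) = 1) by (field; lra).
  assert (E2 : INR q / (2 * INR q - 1) = / (2 - / INR q)).
  { field; lra. }
  rewrite E2 in *.
  assert (/ 2 < / (2 - / INR q)) by (apply Rinv_lt_contravar; lra).
  assert (/ (2 - / INR q) < 1).
  { rewrite <- Rinv_1. apply Rinv_lt_contravar; lra. }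
  repeat split; try lra.
Qed.

Lemma l_S q j : l q (S j) = rr q ^ j.
Proof. unfold l, rr. replace (S j - 1)%nat with j by lia. reflexivity. Qed.

Lemma s_S q j : s q (S j) = s q j + rr q ^ j.
Proof. simpl. rewrite l_S. reflexivity. Qed.

Lemma pow_pos' x n : 0 < x -> 0 < x ^ n.
Proof. intro. apply pow_lt. auto. Qed.

Lemma pow_le_mono x i j : 0 < x -> x <= 1 -> (i <= j)%nat -> x ^ j <= x ^ i.
Proof.
  intros h0 h1 hij. induction hij. lra.
  simpl. pose proof (pow_pos' x m h0). nra.
Qed.

Lemma pow_lt_mono x i j : 0 < x -> x < 1 -> (i < j)%nat -> x ^ j < x ^ i.
Proof.
  intros h0 h1 hij. apply (pow_le_mono x (S i) j h0) in hij; [|lra].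
  simpl in hij. pose proof (pow_pos' x i h0). nra.
Qed.

Lemma s_le q i j : (2 <= q)%nat -> (i <= j)%nat -> s q i <= s q j.
Proof.
  intros hq hij. induction hij. lra. rewrite s_S.
  pose proof (r_facts q hq). pose proof (pow_pos' (rr q) m ltac:(lra)). lra.
Qed.

Lemma s_lt q i j : (2 <= q)%nat -> (i < j)%nat -> s q i < s q j.
Proof.
  intros hq hij. apply (s_le q (S i) j hq) in hij. rewrite s_S in hij.
  pose proof (r_facts q hq). pose proof (pow_pos' (rr q) i ltac:(lra)). lra.
Qed.

Lemma s_nonneg q i : (2 <= q)%nat -> 0 <= s q i.
Proof. intro. apply (s_le q 0 i H). lia. Qed.

Lemma nv_x q a x y : (2 <= q)%nat -> s q a < x < s q (S a) -> ~ is_vertex q (x, y).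
Proof.
  intros hq hx.
  assert (F : forall j, x <> s q j).
  { intros j E. subst x. destruct (Compare_dec.le_lt_dec j a) as [h|h].
    - pose proof (s_le q j a hq h). lra.
    - pose proof (s_le q (S a) j hq h). lra. }
  pose proof (s_nonneg q a hq).
  intros [[j E] | [j [_ [E|[E|E]]]]]; injection E; intros; subst.
  - eapply F; eauto.
  - eapply F; eauto.
  - eapply F; eauto.
  - lra.
Qed.

Lemma nv_y q b x y : (2 <= q)%nat -> rr q ^ (S b) < y < rr q ^ b -> ~ is_vertex q (x, y).
Proof.
  intros hq hy. pose proof (r_facts q hq) as Hr.
  assert (F : forall j, y <> l q j).
  { intros j E. unfold l in E. fold (rr q) in E. subst y.
    destruct (Compare_dec.le_lt_dec (j-1) b) as [h|h].
    - pose proof (pow_le_mono (rr q) _ _ ltac:(lra) ltac:(lra) h). lra.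
    - pose proof (pow_le_mono (rr q) _ _ ltac:(lra) ltac:(lra) h). lra. }
  pose proof (pow_pos' (rr q) (S b) ltac:(lra)).
  intros [[j E] | [j [_ [E|[E|E]]]]]; injection E; intros; subst.
  - lra.
  - eapply F; eauto.
  - eapply F; eauto.
  - eapply F; eauto.
Qed.

Definition good (q : nat) (c : piece) : Prop :=
  0 < snd c /\
  (forall tau, 0 <= tau <= snd c -> inP q (at_time (vv q) c tau)) /\
  (forall tau, 0 < tau < snd c -> ~ is_vertex q (at_time (vv q) c tau)).

Definition link (q : nat) (a b : piece) : Prop :=
  ~ is_vertex q (piece_end (vv q) a) /\ ~ is_vertex q (fst b) /\
  glue q (piece_end (vv q) a) (fst b).

Inductive ch (q : nat) : piece -> list piece -> piece -> Prop :=
| ch1 a : good q a -> ch q a [a] a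
| chc a b L z : good q a -> link q a b -> ch q b L z -> ch q a (a :: L) z.

Lemma ch_app q a L1 z b L2 y :
  ch q a L1 z -> link q z b -> ch q b L2 y -> ch q a (L1 ++ L2) y.
Proof.
  intros H. induction H; intros; simpl.
  - eapply chc; eauto.
  - eapply chc; eauto.
Qed.

Lemma ch_props q a L z : ch q a L z ->
  (exists L', L = a :: L') /\ last L piece0 = z /\
  (forall i, (i < length L)%nat -> good q (nth i L piece0)) /\
  (forall i, (S i < length L)%nat -> link q (nth i L piece0) (nth (S i) L piece0)).
Proof.
  induction 1.
  - split; [eauto|]. split; [reflexivity|]. split.
    + intros i hi. simpl in hi. destruct i; [simpl; auto | lia].
    + intros i hi. simpl in hi. lia.
  - destruct IHch as [[L' ->] [Hl [Hg Hk]]].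
    split; [eauto|]. split; [simpl in *; exact Hl|]. split.
    + intros i hi. destruct i; [simpl; auto|]. simpl. apply Hg. simpl in *. lia.
    + intros i hi. destruct i; [simpl; auto|]. simpl. apply (Hk i). simpl in *. lia.
Qed.

Lemma ch_sc q p0 a L z : ch q a L z -> fst a = p0 -> is_vertex q p0 ->
  is_vertex q (piece_end (vv q) z) -> saddle_connection_from q p0 (vv q) L.
Proof.
  intros H ha hv hz. destruct (ch_props q a L z H) as [[L' ->] [Hl [Hg Hk]]].
  unfold saddle_connection_from. split; [discriminate|]. split; [simpl; auto|].
  split; [auto|]. split; [|split].
  - intros i hi. apply Hg. auto.
  - intros i hi. apply Hk. auto.
  - rewrite Hl. auto.
Qed.

Definition mk (q : nat) (x0 y0 d : R) : piece := ((x0, y0), d / ww q).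

Lemma good_mk q x0 y0 d : (2 <= q)%nat -> 0 < d ->
  (forall sg, 0 <= sg <= d -> inP q (x0 + sg, y0 + sg * mm q)) ->
  (forall sg, 0 < sg < d -> ~ is_vertex q (x0 + sg, y0 + sg * mm q)) ->
  good q (mk q x0 y0 d).
Proof.
  intros hq hd H1 H2. pose proof (r_facts q hq) as Hr.
  assert (hw : 0 < ww q) by tauto.
  assert (E : forall tau, at_time (vv q) (mk q x0 y0 d) tau = (x0 + tau * ww q, y0 + (tau * ww q) * mm q)).
  { intro tau. unfold at_time, mk, vv, mm, ww in *. simpl. f_equal. field. lra. }
  unfold good; simpl. split; [|split].
  - apply Rdiv_lt_0_compat; lra.
  - intros tau ht. rewrite E. apply H1.
    assert (d / ww q * ww q = d) by (field; lra).
    split; [nra|]. destruct ht as [_ ht]. apply (Rmult_le_compat_r (ww q)) in ht; lra.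
  - intros tau ht. rewrite E. apply H2.
    assert (d / ww q * ww q = d) by (field; lra).
    split; [nra|]. destruct ht as [_ ht]. apply (Rmult_lt_compat_r (ww q)) in ht; lra.
Qed.

Lemma end_mk q x0 y0 d : (2 <= q)%nat ->
  piece_end (vv q) (mk q x0 y0 d) = (x0 + d, y0 + d * mm q).
Proof.
  intro hq. pose proof (r_facts q hq) as Hr.
  unfold piece_end, at_time, mk, vv, mm, ww in *. simpl. f_equal; field; lra.
Qed.

Definition pA q k := mk q (s q k) 0 (rr q ^ k).
Definition pP1 q e := mk q 0 (e * mm q) 1.
Definition pP2 q e := mk q 0 ((1 + e) * mm q) (1 - rr q - e).
Definition pG q j e := mk q (s q j - rr q ^ j - e) 0 (rr q ^ j + e).
Definition pH q j e := mk q (s q j) ((rr q ^ j + e) * mm q) (rr q ^ j - rr q ^ j * rr q - e).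

Lemma inP_S q j x y : s q j <= x <= s q (S j) -> 0 <= y <= rr q ^ j -> inP q (x, y).
Proof.
  intros hx hy. exists (S j). simpl fst; simpl snd.
  replace (S j - 1)%nat with j by lia. rewrite l_S. split; [lia|]. auto.
Qed.

Lemma s1 q : s q 1 = 1.
Proof. simpl. unfold l. simpl. ring. Qed.

Ltac facts q hq := let Hr := fresh "Hr" in pose proof (r_facts q hq) as Hr;
  destruct Hr as (?&?&?&?&?&?&?&?).

Lemma good_A q k : (2 <= q)%nat -> good q (pA q k).
Proof.
  intro hq. facts q hq. pose proof (pow_pos' (rr q) k ltac:(lra)).
  apply good_mk; auto.
  - intros sg hs. apply (inP_S q k). rewrite s_S; lra.
    split; [nra|]. assert (sg * mm q <= sg * 1) by (apply Rmult_le_compat_l; lra). lra.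
  - intros sg hs. apply (nv_x q k); auto. rewrite s_S; lra.
Qed.

Lemma good_P1 q e : (2 <= q)%nat -> 0 <= e <= 1 - rr q -> good q (pP1 q e).
Proof.
  intros hq he. facts q hq. apply good_mk; auto; try lra.
  - intros sg hs. apply (inP_S q 0). rewrite s1; simpl; lra. simpl.
    assert ((e + sg) * mm q <= (2 - rr q) * mm q) by (apply Rmult_le_compat_r; lra). nra.
  - intros sg hs. apply (nv_x q 0); auto. rewrite s1; simpl; lra.
Qed.

Lemma good_P2 q e : (2 <= q)%nat -> 0 <= e < 1 - rr q -> good q (pP2 q e).
Proof.
  intros hq he. facts q hq. apply good_mk; auto; try lra.
  - intros sg hs. apply (inP_S q 0). rewrite s1; simpl; lra. simpl.
    assert ((1 + e + sg) * mm q <= (2 - rr q) * mm q) by (apply Rmult_le_compat_r; lra). nra.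
  - intros sg hs. apply (nv_x q 0); auto. rewrite s1; simpl; lra.
Qed.

Lemma good_G q i e : (2 <= q)%nat -> 0 <= e -> rr q ^ (S i) + e <= rr q ^ i ->
  good q (pG q (S i) e).
Proof.
  intros hq he hi. facts q hq. pose proof (pow_pos' (rr q) (S i) ltac:(lra)).
  apply good_mk; auto; try lra.
  - intros sg hs. apply (inP_S q i). rewrite s_S; lra.
    split; [nra|]. assert (sg * mm q <= sg * 1) by (apply Rmult_le_compat_l; lra). lra.
  - intros sg hs. apply (nv_x q i); auto. rewrite s_S; lra.
Qed.

Lemma good_H q j e : (2 <= q)%nat -> 0 <= e -> e < rr q ^ j * (1 - rr q) ->
  good q (pH q j e).
Proof.
  intros hq he hi. facts q hq. pose proof (pow_pos' (rr q) j ltac:(lra)).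
  assert (0 < rr q ^ j * rr q) by nra.
  apply good_mk; auto; try nra.
  - intros sg hs. apply (inP_S q j). rewrite s_S; lra.
    assert ((rr q ^ j + e + sg) * mm q <= (rr q ^ j * (2 - rr q)) * mm q)
      by (apply Rmult_le_compat_r; lra).
    split; nra.
  - intros sg hs. apply (nv_x q j); auto. rewrite s_S; lra.
Qed.


Lemma link_A_P1 q k e : (2 <= q)%nat -> e = rr q ^ k -> link q (pA q k) (pP1 q e).
Proof.
  intros hq he. facts q hq. pose proof (pow_pos' (rr q) k ltac:(lra)). subst e.
  unfold link, pA, pP1. rewrite end_mk by auto. unfold mk. cbn [fst snd].
  assert (Hy : rr q ^ S k < rr q ^ k * mm q < rr q ^ k) by (simpl; split; nra).
  split; [|split].
  - apply (nv_y q k); auto. lra.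
  - apply (nv_y q k); auto.
  - right; left. exists (S k). split; [lia|]. right. exists (rr q ^ k * mm q).
    rewrite !l_S. split; [lra|]. split; [|reflexivity].
    rewrite s_S. f_equal; ring.
Qed.

Lemma link_P1_P2 q e : (2 <= q)%nat -> 0 <= e < 1 - rr q -> link q (pP1 q e) (pP2 q e).
Proof.
  intros hq he. facts q hq.
  unfold link, pP1, pP2. rewrite end_mk by auto. unfold mk. cbn [fst snd].
  assert (Hy : rr q ^ 1 < (1 + e) * mm q < rr q ^ 0).
  { simpl. split; [nra|]. assert ((1 + e) * mm q < (2 - rr q) * mm q) by (apply Rmult_lt_compat_r; lra). lra. }
  split; [|split].
  - apply (nv_y q 0); auto. lra.
  - apply (nv_y q 0); auto.
  - right; left. exists 1%nat. split; [lia|]. right. exists ((1 + e) * mm q).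
    rewrite !l_S. simpl in Hy |- *. split; [lra|]. split; [|reflexivity].
    unfold l; simpl. f_equal; ring.
Qed.

Lemma l1 q : l q 1 = 1.
Proof. reflexivity. Qed.

Lemma link_P2_G1 q e : (2 <= q)%nat -> 0 <= e < 1 - rr q -> link q (pP2 q e) (pG q 1 e).
Proof.
  intros hq he. facts q hq.
  unfold link, pP2, pG. rewrite end_mk by auto. unfold mk. cbn [fst snd]. simpl s. rewrite l1.
  split; [|split].
  - apply (nv_x q 0); auto. simpl s. rewrite l1. lra.
  - apply (nv_x q 0); auto. simpl s. rewrite l1. lra.
  - right; left. exists 1%nat. split; [lia|]. left. exists (1 - rr q - e).
    simpl s. rewrite l1. split; [lra|]. split; f_equal; try ring.
    replace (0 + (1 + e) * mm q + (1 - rr q - e) * mm q) with (mm q * (2 - rr q)) by ring. lra.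
Qed.

Lemma link_G_H q j e : (2 <= q)%nat -> 0 <= e < rr q ^ j * (1 - rr q) ->
  link q (pG q j e) (pH q j e).
Proof.
  intros hq he. facts q hq. pose proof (pow_pos' (rr q) j ltac:(lra)).
  unfold link, pG, pH. rewrite end_mk by auto. unfold mk. cbn [fst snd].
  assert (Hy : rr q ^ S j < (rr q ^ j + e) * mm q < rr q ^ j).
  { simpl. split; [nra|].
    assert ((rr q ^ j + e) * mm q < (rr q ^ j * (2 - rr q)) * mm q) by (apply Rmult_lt_compat_r; nra). nra. }
  replace (s q j - rr q ^ j - e + (rr q ^ j + e)) with (s q j) by ring.
  replace (0 + (rr q ^ j + e) * mm q) with ((rr q ^ j + e) * mm q) by ring.
  split; [|split].
  - apply (nv_y q j); auto.
  - apply (nv_y q j); auto.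
  - left. reflexivity.
Qed.

Lemma link_H_G q j e : (2 <= q)%nat -> 0 <= e < rr q ^ j * (1 - rr q) ->
  link q (pH q j e) (pG q (S j) e).
Proof.
  intros hq he. facts q hq. pose proof (pow_pos' (rr q) j ltac:(lra)).
  assert (0 < rr q ^ j * rr q) by nra.
  unfold link, pG, pH. rewrite end_mk by auto. unfold mk. cbn [fst snd].
  assert (Hx : s q j < s q (S j) - rr q ^ S j - e < s q (S j)).
  { rewrite s_S. simpl. nra. }
  split; [|split].
  - apply (nv_x q j); auto. rewrite s_S in *. simpl in *. nra.
  - apply (nv_x q j); auto.
  - right; left. exists (S j). split; [lia|]. left. exists (s q (S j) - rr q ^ S j - e).
    replace (S j - 1)%nat with j by lia. rewrite l_S. split; [lra|]. split; [|reflexivity].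
    rewrite s_S in *. simpl in *. f_equal; [ring|].
    assert ((rr q ^ j + e) * mm q + (rr q ^ j - rr q ^ j * rr q - e) * mm q
            = rr q ^ j * (mm q * (2 - rr q))) by ring. nra.
Qed.

Lemma link_G_P1 q n e e' : (2 <= q)%nat -> e' = e + rr q ^ S n ->
  rr q ^ S n <= e -> rr q ^ S n + e < rr q ^ n -> link q (pG q (S n) e) (pP1 q e').
Proof.
  intros hq he' h1 h2. facts q hq. pose proof (pow_pos' (rr q) (S n) ltac:(lra)).
  subst e'. unfold link, pG, pP1. rewrite end_mk by auto. unfold mk. cbn [fst snd].
  replace (s q (S n) - rr q ^ S n - e + (rr q ^ S n + e)) with (s q (S n)) by ring.
  assert (Hy : rr q ^ S n < (rr q ^ S n + e) * mm q < rr q ^ n).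
  { split.
    - assert (rr q ^ S n * 1 < (rr q ^ S n + e) * mm q); [|lra].
      assert (rr q ^ S n * (mm q * (2 - rr q)) < (rr q ^ S n + e) * mm q); [|nra].
      nra.
    - assert ((rr q ^ S n + e) * mm q < rr q ^ n * (mm q * (2 - rr q))); [|nra].
      nra. }
  split; [|split].
  - apply (nv_y q n); auto. lra.
  - apply (nv_y q n); auto. lra.
  - right; left. exists (S n). split; [lia|]. right. exists ((rr q ^ S n + e) * mm q).
    rewrite !l_S. split; [lra|]. split; f_equal; ring.
Qed.

Lemma final_vertex q n e : (2 <= q)%nat -> e = rr q ^ S n * (1 - rr q) ->
  is_vertex q (piece_end (vv q) (pG q (S n) e)).
Proof.
  intros hq he. facts q hq. unfold pG. rewrite end_mk by auto.
  right. exists (S (S n)). split; [lia|]. left.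
  rewrite l_S. simpl Nat.sub. f_equal; [ring|].
  subst e. replace (0 + (rr q ^ S n + rr q ^ S n * (1 - rr q)) * mm q)
    with (rr q ^ S n * (mm q * (2 - rr q))) by ring. rewrite H3. ring.
Qed.


Fixpoint mids q j n e : list piece :=
  match n with
  | O => []
  | S n' => pG q j e :: pH q j e :: mids q (S j) n' e
  end.

Lemma mids_ch q e : (2 <= q)%nat -> 0 <= e -> forall n i,
  e < rr q ^ (i + n) * (1 - rr q) ->
  ch q (pG q (S i) e) (mids q (S i) n e ++ [pG q (S i + n) e]) (pG q (S i + n) e).
Proof.
  intros hq he. facts q hq. induction n as [|n IH]; intros i hi.
  - rewrite Nat.add_0_r in *. simpl. apply ch1. apply good_G; auto.
    simpl. pose proof (pow_pos' (rr q) i ltac:(lra)). nra.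
  - assert (Hm : rr q ^ (i + S n) <= rr q ^ (S i)) by (apply pow_le_mono; lra || lia).
    assert (hS : e < rr q ^ (S i) * (1 - rr q)) by nra.
    assert (hii : e < rr q ^ i * (1 - rr q)).
    { assert (rr q ^ (S i) <= rr q ^ i) by (apply pow_le_mono; lra || lia). nra. }
    simpl mids. simpl app.
    apply chc with (b := pH q (S i) e).
    + apply good_G; auto. simpl. pose proof (pow_pos' (rr q) i ltac:(lra)). nra.
    + apply link_G_H; auto.
    + apply chc with (b := pG q (S (S i)) e).
      * apply good_H; auto.
      * apply link_H_G; auto.
      * try replace (S i + S n)%nat with (S (S i) + n)%nat by lia.
        try replace (S (i + S n))%nat with (S (S i) + n)%nat by lia.
        apply IH. replace (S i + n)%nat with (i + S n)%nat by lia. auto.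
Qed.

Definition loop q n e := pP1 q e :: pP2 q e :: mids q 1 n e ++ [pG q (S n) e].

Lemma loop_ch q n e : (2 <= q)%nat -> 0 <= e -> e < rr q ^ n * (1 - rr q) ->
  ch q (pP1 q e) (loop q n e) (pG q (S n) e).
Proof.
  intros hq he hn. facts q hq.
  assert (rr q ^ n <= 1) by (apply (pow_le_mono (rr q) 0 n); lra || lia).
  assert (h1 : e < 1 - rr q) by nra.
  unfold loop. apply chc with (b := pP2 q e).
  - apply good_P1; auto. lra.
  - apply link_P1_P2; auto.
  - apply chc with (b := pG q 1 e).
    + apply good_P2; auto.
    + apply link_P2_G1; auto.
    + apply (mids_ch q e hq he n 0). simpl. auto.
Qed.

Fixpoint loops q n c cnt : list piece :=
  match cnt with
  | O => []
  | S cnt' => loop q n (INR c * rr q ^ S n) ++ loops q n (S c) cnt'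
  end.

Definition final q n1 := loop q n1 (INR (q - 1) * rr q ^ S (S n1)).

Lemma ef_eq q m : (2 <= q)%nat -> INR (q - 1) * rr q ^ S m = rr q ^ m * (1 - rr q).
Proof.
  intro hq. facts q hq. rewrite minus_INR by lia. simpl INR.
  replace ((INR q - 1) * rr q ^ S m) with (rr q ^ m * (rr q * INR q - rr q)) by (simpl; ring).
  rewrite H1. ring.
Qed.

Lemma loops_ch q n1 : (2 <= q)%nat -> forall cnt c, (1 <= c)%nat -> (c + cnt = q - 1)%nat ->
  ch q (pP1 q (INR c * rr q ^ S (S n1))) (loops q (S n1) c cnt ++ final q n1)
     (pG q (S n1) (INR (q - 1) * rr q ^ S (S n1))).
Proof.
  intros hq. facts q hq. set (P := rr q ^ S n1).
  assert (hP : 0 < P) by (apply pow_pos'; lra).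
  assert (hP1 : P < rr q ^ n1) by (apply pow_lt_mono; lra || lia).
  assert (ha : rr q ^ S (S n1) = rr q * P) by reflexivity.
  induction cnt as [|cnt IH]; intros c hc hcq.
  - change (loops q (S n1) c 0) with (@nil piece). rewrite app_nil_l. replace c with (q - 1)%nat by lia. unfold final. apply loop_ch; auto.
    + apply Rmult_le_pos; [apply pos_INR|]. rewrite ha. nra.
    + rewrite ef_eq by auto. fold P. nra.
  - change (loops q (S n1) c (S cnt)) with (loop q (S n1) (INR c * rr q ^ S (S n1)) ++ loops q (S n1) (S c) cnt). rewrite <- app_assoc.
    assert (hc1 : 1 <= INR c) by (apply (le_INR 1); lia).
    assert (hc2 : INR c <= INR q - 2).
    { replace 2 with (INR 2) by reflexivity. rewrite <- minus_INR by lia. apply le_INR. lia. }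
    assert (X : INR c * rr q <= 1 - 2 * rr q) by nra.
    assert (X1 : rr q <= INR c * rr q) by nra.
    assert (Xp : 0 < INR c * rr q) by nra.
    assert (Ee : INR c * rr q ^ S (S n1) = (INR c * rr q) * P) by (rewrite ha; ring).
    apply ch_app with (z := pG q (S (S n1)) (INR c * rr q ^ S (S n1))) (b := pP1 q (INR (S c) * rr q ^ S (S n1))).
    + apply loop_ch; auto.
      * rewrite Ee. nra.
      * rewrite Ee. fold P. nra.
    + apply link_G_P1; auto.
      * rewrite S_INR. ring.
      * rewrite Ee. fold P. rewrite ha. nra.
      * rewrite Ee. fold P. rewrite ha. nra.
    + apply IH; lia.
Qed.

Theorem theorem3p2 (q k : nat) (hq : (2 <= q)%nat) (hk : (2 < k)%nat) :
  exists L : list piece,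
    saddle_connection_from q (s q k, 0) (2 * INR q - 1, INR q) L.
Proof.
  destruct k as [|[|k]]; try lia. destruct k as [|n1]; try lia.
  exists (pA q (S (S (S n1))) :: loops q (S (S n1)) 1 (q - 2) ++ final q (S n1)).
  apply (ch_sc q _ (pA q (S (S (S n1)))) _ (pG q (S (S n1)) (INR (q - 1) * rr q ^ S (S (S n1))))).
  - apply chc with (b := pP1 q (INR 1 * rr q ^ S (S (S n1)))).
    + apply good_A; auto.
    + apply link_A_P1; auto. simpl INR. ring.
    + apply loops_ch; auto; lia.
  - reflexivity.
  - left. eauto.
  - apply final_vertex; auto. apply ef_eq; auto.
Qed.
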